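(* Let $A\in\mathcal{B}(\Omega)$ with $c(A)>0$ and let $X\in\mathbb{L}^1(\Omega)$ satisfy $0\le XI_A\le M$ for a constant $M>0$. Then for each $\delta>0$, $\hat{\mathbb{E}}[(X+\delta)I_A]>\hat{\mathbb{E}}[XI_A]$.
   Context: $\Omega=C_0^d(\mathbb{R}^+)$ is the space of continuous paths from $[0,\infty)$ to $\mathbb{R}^d$ starting at $0$. $\mathcal{P}$ is a (weakly compact) set of probability measures on $(\Omega,\mathcal{B}(\Omega))$ representing the $G$-expectation. For $X\in L^0(\Omega)$ (Borel maps into $[-\infty,\infty]$) with $E_P[X]$ defined for all $P\in\mathcal{P}$, $\hat{\mathbb{E}}[X]:=\sup_{P\in\mathcal{P}}E_P[X]$; $c(A)=\sup_{P\in\mathcal{P}}P(A)$; $\mathbb{L}^1(\Omega)=\{X\in L^0(\Omega):\hat{\mathbb{E}}[|X|]<\infty\}$. *)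

(* Defs.v *)
From HB Require Import structures.
From mathcomp Require Import all_boot all_order all_algebra.
From mathcomp Require Import all_classical all_reals all_analysis.
From mathcomp Require Import measurable_realfun.
Set Implicit Arguments. Unset Strict Implicit. Unset Printing Implicit Defensive.
Import Order.TTheory GRing.Theory Num.Theory.
Import numFieldNormedType.Exports.
Local Open Scope classical_set_scope.
Local Open Scope ring_scope.

(* The canonical space Omega = C_0^d(R^+): continuous paths w : [0,oo) -> R^d
   with w(0) = 0.  A path is encoded as a function R -> R^d (row vectors) which
   is continuous and vanishes on (-oo,0]; this is a bijective encoding of
   C_0^d(R^+) (extend by 0 to the negative half-line). *)
Record cpath (R : realType) (d : nat) := CPath {
  cpval :> R -> 'rV[R]_d ;
  cpath_cont : continuous cpval ;
  cpath_zero : forall t : R, t <= 0 -> cpval t = 0 }.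

HB.instance Definition _ (R : realType) (d : nat) :=
  gen_eqMixin (cpath R d).
HB.instance Definition _ (R : realType) (d : nat) :=
  gen_choiceMixin (cpath R d).

Lemma cpath0_cont (R : realType) (d : nat) :
  continuous (fun _ : R => (0 : 'rV[R]_d)).
Proof. by move=> x; exact: cvg_cst. Qed.

Definition cpath0 (R : realType) (d : nat) : cpath R d :=
  @CPath R d (fun _ => 0) (@cpath0_cont R d) (fun _ _ => erefl).

HB.instance Definition _ (R : realType) (d : nat) :=
  isPointed.Build (cpath R d) (cpath0 R d).

(* Topology of uniform convergence on compacts: U is open iff around each of
   its points it contains a set {w' | sup_{t in [0,n]} |w'(t)-w(t)| < e}
   (coordinatewise sup-norm). *)
Definition lu_near (R : realType) (d : nat) (w : cpath R d) (n : nat) (e : R)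
  : set (cpath R d) :=
  [set w' : cpath R d | forall t : R, 0 <= t <= n%:R ->
      forall i : 'I_d, `|w' t ord0 i - w t ord0 i| < e].

Definition lu_open (R : realType) (d : nat) (U : set (cpath R d)) : Prop :=
  forall w, U w -> exists n : nat, exists2 e : R, 0 < e & lu_near w n e `<=` U.

Definition Omega (R : realType) (d : nat) :=
  g_sigma_algebraType (@lu_open R d).

Definition lu_continuous (R : realType) (d : nat) (f : Omega R d -> R) : Prop :=
  forall (w : Omega R d) (e : R), 0 < e ->
    exists n : nat, exists2 eta : R, 0 < eta &
      forall w' : Omega R d, lu_near w n eta w' -> `|f w' - f w| < e.

Definition bounded_fun (T : Type) (R : realType) (f : T -> R) : Prop :=
  exists M : R, forall x, `|f x| <= M.

Definition weak_cvg (R : realType) (d : nat)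
  (Pn : nat -> probability (Omega R d) R) (P : probability (Omega R d) R) : Prop :=
  forall f : Omega R d -> R, lu_continuous f -> bounded_fun f ->
    ((fun n => \int[Pn n]_w (f w)%:E) @ \oo --> \int[P]_w (f w)%:E)%E.

(* weak compactness (Omega is Polish, so the weak topology is metrizable and
   compactness is sequential compactness) *)
Definition weakly_compact (R : realType) (d : nat)
  (PP : set (probability (Omega R d) R)) : Prop :=
  forall Pn : nat -> probability (Omega R d) R, (forall n, PP (Pn n)) ->
    exists2 phi : nat -> nat, increasing_seq phi &
      exists2 P, PP P & weak_cvg (Pn \o phi) P.

Definition hatE (R : realType) (d : nat) (PP : set (probability (Omega R d) R))
  (X : Omega R d -> \bar R) : \bar R :=
  ereal_sup [set (\int[P]_w X w)%E | P in PP].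

Definition cap (R : realType) (d : nat) (PP : set (probability (Omega R d) R))
  (A : set (Omega R d)) : \bar R :=
  ereal_sup [set P A | P in PP].

Definition L1 (R : realType) (d : nat) (PP : set (probability (Omega R d) R))
  (X : Omega R d -> \bar R) : Prop :=
  measurable_fun [set: Omega R d] X /\ (hatE PP (fun w => `|X w|%E) < +oo)%E.

(* X * I_A with the convention (+-oo) * 0 = 0 *)
Definition mulInd (R : realType) (d : nat) (X : Omega R d -> \bar R)
  (A : set (Omega R d)) : Omega R d -> \bar R :=
  fun w => (X w * (\1_A w)%:E)%E.

(* Main.v *)
Require Import Defs.
From HB Require Import structures.
From mathcomp Require Import all_boot all_order all_algebra.
From mathcomp Require Import all_classical all_reals all_analysis.
From mathcomp Require Import measurable_realfun.
From mathcomp Require Import lra.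
Import Order.TTheory GRing.Theory Num.Theory.
Local Open Scope classical_set_scope.
Local Open Scope ring_scope.

Theorem proposition3p6 (R : realType) (d : nat)
  (PP : set (probability (Omega R d) R)) (hPP : weakly_compact PP)
  (A : set (Omega R d)) (mA : measurable A) (cA : (0 < cap PP A)%E)
  (X : Omega R d -> \bar R) (hX : L1 PP X)
  (M : R) (hM : 0 < M)
  (hXA : forall w, (0 <= mulInd X A w <= M%:E)%E) :
  forall delta : R, 0 < delta ->
    (hatE PP (mulInd (fun w => X w + delta%:E)%E A) > hatE PP (mulInd X A))%E.
Proof.
move=> delta hd.
have mI : measurable_fun setT (fun w : Omega R d => (\1_A w)%:E : \bar R).
  exact: (@measurable_EFinP _ _ R setT (\1_A)).2 (measurable_indic mA).
have mXA : measurable_fun setT (mulInd X A) by exact: emeasurable_funM hX.1 mI.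
have mXdA : measurable_fun setT (mulInd (fun w => X w + delta%:E)%E A).
  apply: emeasurable_funM mI; apply: emeasurable_funD hX.1 _.
  exact: measurable_cst.
set k := delta / M.
have hk : 0 < k by rewrite divr_gt0.
have L2 : forall w, ((1 + k)%:E * mulInd X A w <=
     mulInd (fun w => X w + delta%:E)%E A w)%E.
  move=> w; have := hXA w; rewrite /mulInd /indic.
  case: (boolP (w \in A)) => _ /=.
    rewrite !mule1; case: (X w) => [r||] /andP[r0 rM]; last 2 first.
    - by rewrite addye // leey.
    - by move: r0; rewrite leNgt ltNy0.
    have r0' : 0 <= r by rewrite -lee_fin.
    rewrite lee_fin in rM.
    rewrite -EFinM -EFinD lee_fin.
    have : k * r <= delta.
      rewrite /k mulrAC ler_pdivrMr //; nra.
    lra.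
  by rewrite !mule0.
have L1 : forall w, ((delta * \1_A w)%:E <=
     mulInd (fun w => X w + delta%:E)%E A w)%E.
  move=> w; have := hXA w; rewrite /mulInd /indic.
  case: (boolP (w \in A)) => _ /=.
    rewrite !mule1 mulr1; case: (X w) => [r||] /andP[r0 rM]; last 2 first.
    - by rewrite addye // leey.
    - by move: r0; rewrite leNgt ltNy0.
    have r0' : 0 <= r by rewrite -lee_fin.
    rewrite -EFinD lee_fin; lra.
  by rewrite !mule0 mulr0.
have [_ [P0 PP0 <-] P0A] := ereal_sup_gt cA.
have aP_ge0 : forall P : probability (Omega R d) R, (0 <= \int[P]_w mulInd X A w)%E.
  by move=> P; apply: integral_ge0 => w _; have /andP[] := hXA w.
have aP_leM : forall P : probability (Omega R d) R, (\int[P]_w mulInd X A w <= M%:E)%E.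
  move=> P; apply: (@le_trans _ _ (\int[P]_w (cst M%:E) w)%E).
    apply: ge0_le_integral => //.
    - by move=> w _; have /andP[] := hXA w.
    - by move=> w _; have /andP[] := hXA w.
  rewrite integral_cst // -[leRHS]mule1 -(probability_setT P); exact: lexx.
rewrite ltNge; apply/negP => hts.
have hs0 : (0 <= hatE PP (mulInd X A))%E.
  apply: le_trans (aP_ge0 P0) _; apply: ereal_sup_ubound; by exists P0.
have hsM : (hatE PP (mulInd X A) <= M%:E)%E.
  by apply: ge_ereal_sup => _ [P PPP <-].
move: hs0 hsM hts; case E : (hatE PP (mulInd X A)) => [r||] //= r0 rM hts.
have tP : forall P, PP P ->
   (\int[P]_w mulInd (fun w => X w + delta%:E)%E A w <= r%:E)%E.
  move=> P PPP; apply: le_trans hts; apply: ereal_sup_ubound; by exists P.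
have hr : r <= r / (1 + k).
  rewrite -lee_fin -E; apply: ge_ereal_sup => _ [P PPP <-].
  have := aP_ge0 P; have := aP_leM P.
  have h1 : ((1 + k)%:E * \int[P]_w mulInd X A w <= r%:E)%E.
    rewrite -ge0_integralZl //; last by rewrite lee_fin; lra.
      apply: le_trans _ (tP P PPP); apply: ge0_le_integral => //.
      - by move=> w _; apply: mule_ge0; [rewrite lee_fin; lra| have /andP[] := hXA w].
      - by apply: emeasurable_funM => //; exact: measurable_cst.
    by move=> w _; have /andP[] := hXA w.
  move: h1; set I := (\int[P]_w mulInd X A w)%E.
  case: I => [a| |] h1 hle hge; last 2 first.
  - by move: hle; rewrite leye_eq.
  - by move: hge; rewrite leNgt ltNy0.
  move: h1; rewrite -EFinM !lee_fin => h1.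
  rewrite ler_pdivlMr; last lra.
  by rewrite mulrC.
have r00 : r = 0.
  move: hr; rewrite ler_pdivlMr; last lra.
  have r0' : 0 <= r by rewrite -lee_fin.
  move=> hr; apply/eqP; rewrite eq_le r0' andbT; nra.
have := tP P0 PP0; rewrite r00.
have : ((delta%:E * P0 A) <= \int[P0]_w mulInd (fun w => X w + delta%:E)%E A w)%E.
  have hA : P0 A = (\int[P0]_w (\1_A w)%:E)%E by rewrite integral_indic // setIT.
  rewrite hA -ge0_integralZl //; last by rewrite lee_fin ltW.
  apply: ge0_le_integral => //.
  - move=> w _; rewrite -EFinM -[X in (X <= _)%E]/(0%:E) lee_fin (mulr_ge0 (ltW hd)) //.
  - by apply: emeasurable_funM => //; exact: measurable_cst.
  - by move=> w _; rewrite -EFinM; exact: L1.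
move=> h1 h2; have := le_trans h1 h2.
by rewrite leNgt mule_gt0 ?lte_fin.
Qed.
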